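(* Let $H$ and $K$ be finite-dimensional complex Hilbert spaces, let $\mathcal{C}$ be a mapping cone on $K$, and let $B$ be a C*-subalgebra of $B(H)$ containing the identity $1$. If $\phi: B\to B(K)$ is a $\mathcal{C}$-positive linear map, then there is a $\mathcal{C}$-positive linear map $\psi: B(H)\to B(K)$ extending $\phi$.
   Context: A mapping cone $\mathcal{C}$ on $K$ is a closed convex cone of positive linear maps $B(K)\to B(K)$ such that $\alpha\in\mathcal{C}$ implies $\beta\circ\alpha\circ\gamma\in\mathcal{C}$ for all completely positive maps $\beta,\gamma: B(K)\to B(K)$. Fix an orthonormal basis of $K$ and let $b^t$ denote the transpose of $b\in B(K)$; $Tr$ is the usual trace. For a linear subspace $A\subseteq B(H)$ containing $1$, let $A\otimes B(K)\subseteq B(H\otimes K)$ be the span of $\{a\otimes b: a\in A, b\in B(K)\}$. For a linear map $\phi: A\to B(K)$, its dual functional $\tilde\phi$ is the linear functional on $A\otimes B(K)$ with $\tilde\phi(a\otimes b)=Tr(\phi(a)b^t)$. Let $P(A,\mathcal{C})=\{x\in (A\otimes B(K))_{sa} : (\iota\otimes\alpha)(x)\ge 0 \ \forall \alpha\in\mathcal{C}\}$, with $\iota$ the identity map on $B(H)$. The map $\phi$ is $\mathcal{C}$-positive if $\tilde\phi(x)\ge 0$ for all $x\in P(A,\mathcal{C})$. *)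

(* Defs.v *)
From HB Require Import structures.
From mathcomp Require Import all_boot all_order all_algebra.
From mathcomp Require Import complex mxtens.
From mathcomp Require Import boolp classical_sets filter reals topology normedtype.
Set Implicit Arguments. Unset Strict Implicit. Unset Printing Implicit Defensive.
Import Order.TTheory GRing.Theory Num.Theory.
Import numFieldNormedType.Exports.
Local Open Scope ring_scope.
Local Open Scope classical_set_scope.

(* B(H) with dim H = n is 'M[R[i]]_n; B(K) with dim K = k is 'M[R[i]]_k.
   H (x) K = C^(n*k), with the Kronecker index convention of mxtens. *)

Section Defs.
Variable R : realType.
Local Notation C := R[i].

Definition adjmx m p (A : 'M[C]_(m, p)) : 'M[C]_(p, m) := (map_mx Num.conj A)^T.

Definition hermitian m (A : 'M[C]_m) := adjmx A = A.

(* positive (semidefinite) operator: <v, A v> >= 0 for all v (in the order of C,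
   0 <= z means z is real and nonnegative) *)
Definition psd m (A : 'M[C]_m) := forall v : 'cV[C]_m, 0 <= (adjmx v *m A *m v) 0 0.

Definition lin m p (f : 'M[C]_m -> 'M[C]_p) :=
  forall (c : C) x y, f (c *: x + y) = c *: f x + f y.

Definition positive_map m p (f : 'M[C]_m -> 'M[C]_p) :=
  lin f /\ forall x, psd x -> psd (f x).

Definition blk m k (X : 'M[C]_(m * k)) (i j : 'I_m) : 'M[C]_k :=
  \matrix_(a, b) X (mxtens_index (i, a)) (mxtens_index (j, b)).

(* ampliation (iota (x) alpha) on B(C^m (x) C^k) *)
Definition amp m k (alpha : 'M[C]_k -> 'M[C]_k) (X : 'M[C]_(m * k)) : 'M[C]_(m * k) :=
  \matrix_(p, q) alpha (blk X (mxtens_unindex p).1 (mxtens_unindex q).1)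
                       (mxtens_unindex p).2 (mxtens_unindex q).2.

Definition completely_positive k (f : 'M[C]_k -> 'M[C]_k) :=
  lin f /\ forall m (X : 'M[C]_(m * k)), psd X -> psd (amp f X).

Definition mx_cvg m p (u : nat -> 'M[C]_(m, p)) (l : 'M[C]_(m, p)) :=
  forall i j, (fun t => complex.Re (u t i j)) @ \oo --> complex.Re (l i j) /\
              (fun t => complex.Im (u t i j)) @ \oo --> complex.Im (l i j).

Definition mapping_cone k (Cc : set ('M[C]_k -> 'M[C]_k)) :=
  [/\ (forall a, Cc a -> positive_map a),
      (forall a b, Cc a -> Cc b -> Cc (fun x => a x + b x)),
      (forall (c : C) a, 0 <= c -> Cc a -> Cc (fun x => c *: a x)),
      (forall (s : nat -> 'M[C]_k -> 'M[C]_k) a,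
          (forall t, Cc (s t)) -> (forall x, mx_cvg (fun t => s t x) (a x)) -> Cc a) &
      (forall a b g, Cc a -> completely_positive b -> completely_positive g ->
          Cc (b \o a \o g))].

(* unital C*-subalgebra of B(C^n) (finite dimensional: a unital *-subalgebra) *)
Definition unital_Cstar_subalg n (B : set 'M[C]_n) :=
  [/\ B 1%:M,
      (forall x y, B x -> B y -> B (x + y)),
      (forall (c : C) x, B x -> B (c *: x)),
      (forall x y, B x -> B y -> B (x *m y)) &
      (forall x, B x -> B (adjmx x))].

(* phi : A -> B(K) is linear (values outside A are irrelevant) *)
Definition lin_on n k (A : set 'M[C]_n) (phi : 'M[C]_n -> 'M[C]_k) :=
  forall (c : C) x y, A x -> A y -> phi (c *: x + y) = c *: phi x + phi y.

Definition inP n k (Cc : set ('M[C]_k -> 'M[C]_k)) (x : 'M[C]_(n * k)) :=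
  hermitian x /\ forall alpha, Cc alpha -> psd (amp alpha x).

(* phi is C-positive: the dual functional phi~, given on a representation
   x = sum_i a_i (x) b_i (a_i in A) by sum_i Tr(phi(a_i) b_i^t),
   is nonnegative on P(A, C). Every element of A (x) B(K) has such a representation. *)
Definition C_positive n k (A : set 'M[C]_n) (Cc : set ('M[C]_k -> 'M[C]_k))
    (phi : 'M[C]_n -> 'M[C]_k) :=
  forall N (a : 'I_N -> 'M[C]_n) (b : 'I_N -> 'M[C]_k),
    (forall i, A (a i)) ->
    inP Cc (\sum_(i < N) (a i *t b i)) ->
    0 <= \sum_(i < N) \tr (phi (a i) *m (b i)^T).

End Defs.

(* Main.v *)
Require Import Defs.
From HB Require Import structures.
From mathcomp Require Import all_boot all_order all_algebra.
From mathcomp Require Import complex mxtens.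
From mathcomp Require Import boolp classical_sets filter reals topology normedtype.
From mathcomp Require Import ring.
Set Implicit Arguments. Unset Strict Implicit. Unset Printing Implicit Defensive.
Import Order.TTheory GRing.Theory Num.Theory.
Local Open Scope ring_scope.

Section Riesz.
Local Open Scope classical_set_scope.
Variables (R : realType) (V : lmodType R) (P : set V).
Hypothesis PD : forall x y, P x -> P y -> P (x + y).
Hypothesis PZ : forall (r : R) x, 0 <= r -> P x -> P (r *: x).

Definition subsp (W : set V) := W 0 /\ forall (r : R) x y, W x -> W y -> W (r *: x + y).
Definition linon (W : set V) (f : V -> R) :=
  forall (r : R) x y, W x -> W y -> f (r *: x + y) = r * f x + f y.
Definition posP (W : set V) (f : V -> R) := forall x, W x -> P x -> 0 <= f x.
Definition cof (W : set V) v := exists w, W w /\ P (w - v).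
Definition addv (W : set V) v : set V := [set x | exists w t, W w /\ x = w + t *: v].

Lemma subspD W x y : subsp W -> W x -> W y -> W (x + y).
Proof. by case=> _ H Wx Wy; have := H 1 x y Wx Wy; rewrite scale1r. Qed.
Lemma subspZ W r x : subsp W -> W x -> W (r *: x).
Proof. by case=> W0 H Wx; have := H r x 0 Wx W0; rewrite addr0. Qed.
Lemma subspN W x : subsp W -> W x -> W (- x).
Proof. by move=> sW Wx; rewrite -scaleN1r; apply: subspZ. Qed.
Lemma subspB W x y : subsp W -> W x -> W y -> W (x - y).
Proof. by move=> sW Wx Wy; apply: subspD => //; apply: subspN. Qed.

Lemma linon0 W f : subsp W -> linon W f -> f 0 = 0.
Proof.
case=> W0 _ lf; have := lf 1 0 0 W0 W0; rewrite scale1r addr0 mul1r.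
by move=> h; apply: (addrI (f 0)); rewrite addr0 -h.
Qed.
Lemma linonZ W f r x : subsp W -> linon W f -> W x -> f (r *: x) = r * f x.
Proof.
move=> sW lf Wx; have := lf r x 0 Wx sW.1.
by rewrite addr0 (linon0 sW lf) addr0.
Qed.
Lemma linonD W f x y : subsp W -> linon W f -> W x -> W y -> f (x + y) = f x + f y.
Proof. by move=> sW lf Wx Wy; have := lf 1 x y Wx Wy; rewrite scale1r mul1r. Qed.
Lemma linonN W f x : subsp W -> linon W f -> W x -> f (- x) = - f x.
Proof. by move=> sW lf Wx; rewrite -scaleN1r (linonZ _ sW lf Wx) mulN1r. Qed.
Lemma linonB W f x y : subsp W -> linon W f -> W x -> W y -> f (x - y) = f x - f y.
Proof.
move=> sW lf Wx Wy; rewrite (linonD sW lf Wx (subspN sW Wy)).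
by rewrite (linonN sW lf Wy).
Qed.

Lemma addv_subsp W v : subsp W -> subsp (addv W v).
Proof.
move=> sW; split; first by exists 0, 0; rewrite scale0r addr0; split => //; exact: sW.1.
move=> r x y [w1 [t1 [W1 ->]]] [w2 [t2 [W2 ->]]].
exists (r *: w1 + w2), (r * t1 + t2); split; first exact: sW.2.
by rewrite scalerDr scalerDl scalerA; rewrite addrACA.
Qed.

Lemma addv_sub W v : W `<=` addv W v.
Proof. by move=> x Wx; exists x, 0; rewrite scale0r addr0. Qed.
Lemma addv_v W v : subsp W -> addv W v v.
Proof. by move=> sW; exists 0, 1; rewrite scale1r add0r; split => //; exact: sW.1. Qed.

Lemma cof_mono W W' v : W `<=` W' -> cof W v -> cof W' v.
Proof. by move=> sub [w [Ww Pw]]; exists w; split => //; apply: sub. Qed.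

Lemma step W f v : subsp W -> linon W f -> posP W f -> cof W v -> cof W (- v) ->
  exists F, [/\ linon (addv W v) F, posP (addv W v) F & forall x, W x -> F x = f x].
Proof.
move=> sW lf pf [w2 [W2 P2]] [w1 [W1 P1]].
have [Wv|nWv] := pselect (W v).
  have sub : addv W v `<=` W.
    by move=> x [w [t [Ww ->]]]; apply: subspD => //; apply: subspZ.
  exists f; split => //.
    by move=> r x y /sub Wx /sub Wy; apply: lf.
  by move=> x /sub Wx; apply: pf.
pose L := [set y | exists w, [/\ W w, P (v - w) & y = f w]].
pose c := sup L.
have Lub : forall u, W u -> P (u - v) -> ubound L (f u).
  move=> u Wu Pu y [w [Ww Pw ->]].
  rewrite -subr_ge0 -(linonB sW lf Wu Ww); apply: pf; first exact: subspB.
  by have := PD Pu Pw; rewrite addrA subrK.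
have L0 : L !=set0.
  exists (f (- w1)), (- w1); split => //; first exact: subspN.
  by rewrite opprK addrC; move: P1; rewrite opprK.
have Lhs : has_sup L by split => //; exists (f w2); apply: Lub.
have uniq : forall a b t s, W a -> W b -> a + t *: v = b + s *: v -> a = b /\ t = s.
  move=> a b t s Wa Wb E.
  have ts : t = s.
    apply/eqP; rewrite -subr_eq0; apply/negP => /negP nz; apply: nWv.
    have : (t - s) *: v = b - a.
      by rewrite scalerBl; apply/eqP; rewrite subr_eq addrAC -E addrC addKr.
    move=> E2; have -> : v = (t - s)^-1 *: (b - a) by rewrite -E2 scalerA mulVf // scale1r.
    by apply: subspZ => //; apply: subspB.
  by split => //; move: E; rewrite ts => /addIr.
pose F x := match pselect (exists p : V * R, W p.1 /\ x = p.1 + p.2 *: v) with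
  | left h => let p := projT1 (cid h) in f p.1 + p.2 * c
  | right _ => 0 end.
have Fdec : forall w t, W w -> F (w + t *: v) = f w + t * c.
  move=> w t Ww; rewrite /F; case: pselect => [h|]; last first.
    by move=> nh; exfalso; apply: nh; exists (w, t).
  case: (cid h) => [[a b] /= [Wa E]].
  by have [-> ->] := uniq _ _ _ _ Wa Ww (esym E).
exists F; split.
- move=> r x y [a [t [Wa ->]]] [b [s [Wb ->]]].
  have -> : r *: (a + t *: v) + (b + s *: v) = (r *: a + b) + (r * t + s) *: v.
    by rewrite scalerDr scalerDl scalerA addrACA.
  rewrite !Fdec //; last by apply: sW.2.
  by rewrite lf // mulrDr mulrDl mulrA addrACA.
- move=> x [w [t [Ww ->]]] Px; rewrite Fdec //.
  have [tgt0|tle0] := ltrP 0 t.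
    have Pu : P (v - (- (t^-1 *: w))).
      have ti : 0 <= t^-1 by rewrite invr_ge0 ltW.
      have := PZ ti Px.
      by rewrite scalerDr scalerA mulVf ?gt_eqF // scale1r opprK addrC.
    have : L (f (- (t^-1 *: w))).
      by exists (- (t^-1 *: w)); split => //; apply: subspN => //; apply: subspZ.
    move/(ub_le_sup (proj2 Lhs)); rewrite -/c (linonN sW lf (subspZ _ sW Ww)).
    rewrite (linonZ _ sW lf Ww) -mulNr => h.
    have := ler_wpM2l (ltW tgt0) h; rewrite mulrA mulrN mulfV ?gt_eqF // mulN1r.
    by rewrite -subr_ge0 opprK addrC.
  have [t0|tlt0] := eqVneq t 0.
    by move: Px; rewrite t0 scale0r mul0r !addr0 => Px; apply: pf.
  have tn : t < 0 by rewrite lt_neqAle tlt0 tle0.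
  have Pu : P ((- t)^-1 *: w - v).
    have ti : 0 <= (- t)^-1 by rewrite invr_ge0 oppr_ge0 ltW.
    have := PZ ti Px.
    by rewrite scalerDr scalerA invrN mulNr mulVf ?lt_eqF // scaleN1r.
  have := ge_sup L0 (Lub _ (subspZ _ sW Ww) Pu).
  rewrite -/c (linonZ _ sW lf Ww) => h.
 have tp : 0 <= - t by rewrite oppr_ge0 ltW.
  have := ler_wpM2l tp h; rewrite mulrA mulfV ?oppr_eq0 ?lt_eqF // mul1r.
  by rewrite mulNr -subr_ge0 opprK addrC.
- by move=> x Wx; have := Fdec x 0 Wx; rewrite scale0r addr0 mul0r addr0.
Qed.

Fixpoint ext (W : set V) (s : seq V) : set V :=
  if s is v :: s' then ext (addv W v) s' else W.

Lemma ext_subsp s : forall W, subsp W -> subsp (ext W s).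
Proof. elim: s => [|v s IH] W sW //=; apply: IH; exact: addv_subsp. Qed.
Lemma ext_sub s : forall W, W `<=` ext W s.
Proof. elim: s => [|v s IH] W x Wx //=; apply: IH; exact: addv_sub. Qed.
Lemma ext_mem s : forall W, subsp W -> forall v, v \in s -> ext W s v.
Proof.
elim: s => [|u s IH] W sW v //=; rewrite in_cons => /orP [/eqP ->|vs].
  by apply: ext_sub; apply: addv_v.
by apply: IH => //; apply: addv_subsp.
Qed.

Lemma riesz s : forall W f, subsp W -> linon W f -> posP W f ->
  (forall v, v \in s -> cof W v /\ cof W (- v)) ->
  exists F, [/\ linon (ext W s) F, posP (ext W s) F & forall x, W x -> F x = f x].
Proof.
elim: s => [|v s IH] W f sW lf pf cf /=; first by exists f.
have [c1 c2] := cf v (mem_head _ _).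
have [F1 [l1 p1 e1]] := step sW lf pf c1 c2.
have cf1 : forall u, u \in s -> cof (addv W v) u /\ cof (addv W v) (- u).
  move=> u us; have [d1 d2] := cf u (mem_behead (s := v :: s) us).
  by split; [apply: cof_mono d1 | apply: cof_mono d2]; apply: addv_sub.
have [F [l p e]] := IH _ F1 (addv_subsp v sW) l1 p1 cf1.
exists F; split => // x Wx; rewrite e ?e1 //; exact: addv_sub.
Qed.

End Riesz.

Section MatA.
Variable R : realType.
Local Notation C := R[i].

Lemma adjmxE m p (A : 'M[C]_(m, p)) i j : adjmx A i j = (A j i)^*.
Proof. by rewrite !mxE. Qed.

Lemma adjmxK m p (A : 'M[C]_(m, p)) : adjmx (adjmx A) = A.
Proof. by apply/matrixP => i j; rewrite !adjmxE conjCK. Qed.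

Lemma adjmxD m p (A B : 'M[C]_(m, p)) : adjmx (A + B) = adjmx A + adjmx B.
Proof. by apply/matrixP => i j; rewrite !mxE rmorphD. Qed.

Lemma adjmxZ m p (c : C) (A : 'M[C]_(m, p)) : adjmx (c *: A) = c^* *: adjmx A.
Proof. by apply/matrixP => i j; rewrite !mxE rmorphM. Qed.

Lemma adjmxN m p (A : 'M[C]_(m, p)) : adjmx (- A) = - adjmx A.
Proof. by apply/matrixP => i j; rewrite !mxE rmorphN. Qed.

Lemma adjmxB m p (A B : 'M[C]_(m, p)) : adjmx (A - B) = adjmx A - adjmx B.
Proof. by rewrite adjmxD adjmxN. Qed.

Lemma adjmx0 m p : adjmx (0 : 'M[C]_(m, p)) = 0.
Proof. by apply/matrixP => i j; rewrite !mxE rmorph0. Qed.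

Lemma adjmx_sum m p I (r : seq I) (Pr : pred I) (F : I -> 'M[C]_(m, p)) :
  adjmx (\sum_(i <- r | Pr i) F i) = \sum_(i <- r | Pr i) adjmx (F i).
Proof.
elim/big_rec2: _ => [|i y1 y2 _ <-]; first exact: adjmx0.
by rewrite adjmxD.
Qed.

Lemma adjmx_scalar m (c : C) : adjmx (c%:M : 'M[C]_m) = (c^*)%:M.
Proof.
by apply/matrixP => i j; rewrite !mxE rmorphMn eq_sym.
Qed.

Lemma adjmx_tens m1 p1 m2 p2 (A : 'M[C]_(m1, p1)) (B : 'M[C]_(m2, p2)) :
  adjmx (A *t B) = adjmx A *t adjmx B.
Proof. by apply/matrixP => i j; rewrite !mxE rmorphM. Qed.

Definition form m (A : 'M[C]_m) (x y : 'cV[C]_m) := (adjmx x *m A *m y) 0 0.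

Lemma formE m (A : 'M[C]_m) x y :
  form A x y = \sum_a \sum_b (x a 0)^* * A a b * y b 0.
Proof.
rewrite /form mxE; under eq_bigr do rewrite mxE mulr_suml.
rewrite exchange_big /=; apply: eq_bigr => a _; apply: eq_bigr => b _.
by rewrite adjmxE.
Qed.

Lemma psd_form m (A : 'M[C]_m) : psd A <-> forall x, 0 <= form A x x.
Proof. by []. Qed.

Lemma formDA m (A B : 'M[C]_m) x y : form (A + B) x y = form A x y + form B x y.
Proof.
rewrite !formE -big_split /=; apply: eq_bigr => a _.
rewrite -big_split /=; apply: eq_bigr => b _; rewrite mxE.
by rewrite mulrDr mulrDl.
Qed.

Lemma formZA m (c : C) (A : 'M[C]_m) x y : form (c *: A) x y = c * form A x y.
Proof.
rewrite !formE mulr_sumr; apply: eq_bigr => a _.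
rewrite mulr_sumr; apply: eq_bigr => b _; rewrite mxE.
by rewrite mulrCA !mulrA.
Qed.

Lemma formNA m (A : 'M[C]_m) x y : form (- A) x y = - form A x y.
Proof. by rewrite -scaleN1r formZA mulN1r. Qed.

Lemma formBA m (A B : 'M[C]_m) x y : form (A - B) x y = form A x y - form B x y.
Proof. by rewrite formDA formNA. Qed.

Lemma form0A m (x y : 'cV[C]_m) : form 0 x y = 0.
Proof. by rewrite formE big1 // => a _; rewrite big1 // => b _; rewrite mxE mulr0 mul0r. Qed.

Lemma formDl m (A : 'M[C]_m) x x' y : form A (x + x') y = form A x y + form A x' y.
Proof.
rewrite !formE -big_split /=; apply: eq_bigr => a _.
rewrite -big_split /=; apply: eq_bigr => b _; rewrite mxE rmorphD.
by rewrite !mulrDl.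
Qed.

Lemma formDr m (A : 'M[C]_m) x y y' : form A x (y + y') = form A x y + form A x y'.
Proof.
rewrite !formE -big_split /=; apply: eq_bigr => a _.
rewrite -big_split /=; apply: eq_bigr => b _; rewrite mxE.
by rewrite !mulrDr.
Qed.

Lemma formZl m (A : 'M[C]_m) c x y : form A (c *: x) y = c^* * form A x y.
Proof.
rewrite !formE mulr_sumr; apply: eq_bigr => a _.
rewrite mulr_sumr; apply: eq_bigr => b _; rewrite mxE rmorphM.
by rewrite !mulrA.
Qed.

Lemma formZr m (A : 'M[C]_m) c x y : form A x (c *: y) = c * form A x y.
Proof.
rewrite !formE mulr_sumr; apply: eq_bigr => a _.
rewrite mulr_sumr; apply: eq_bigr => b _; rewrite mxE.
by rewrite mulrCA.
Qed.

Lemma formNl m (A : 'M[C]_m) x y : form A (- x) y = - form A x y.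
Proof. by rewrite -scaleN1r formZl rmorphN rmorph1 mulN1r. Qed.
Lemma formNr m (A : 'M[C]_m) x y : form A x (- y) = - form A x y.
Proof. by rewrite -scaleN1r formZr mulN1r. Qed.
Lemma formBl m (A : 'M[C]_m) x x' y : form A (x - x') y = form A x y - form A x' y.
Proof. by rewrite formDl formNl. Qed.
Lemma formBr m (A : 'M[C]_m) x y y' : form A x (y - y') = form A x y - form A x y'.
Proof. by rewrite formDr formNr. Qed.

Lemma form_adj m (A : 'M[C]_m) x y : form (adjmx A) y x = (form A x y)^*.
Proof.
rewrite !formE exchange_big rmorph_sum; apply: eq_bigr => a _.
rewrite rmorph_sum; apply: eq_bigr => b _.
by rewrite adjmxE !rmorphM /= conjCK; ring.
Qed.

Lemma form_delta m (A : 'M[C]_m) a b :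
  form A (delta_mx a 0) (delta_mx b 0) = A a b.
Proof.
rewrite formE (bigD1 a) //= [X in _ + X]big1 ?addr0; last first.
  move=> a' /negPf na; rewrite big1 // => b' _.
  by rewrite mxE na /= mulr0n rmorph0 !mul0r.
rewrite (bigD1 b) //= [X in _ + X]big1 ?addr0; last first.
  by move=> b' /negPf nb; rewrite [delta_mx b 0 b' 0]mxE nb /= mulr0n mulr0.
by rewrite !mxE !eqxx /= mulr1n rmorph1 mul1r mulr1.
Qed.

Lemma form_real_herm m (A : 'M[C]_m) :
  (forall x, form A x x \is Num.real) -> forall x y, form A y x = (form A x y)^*.
Proof.
move=> hr x y.
set a := form A x y; set b := form A y x.
have h1 : form A (x + y) (x + y) = form A x x + form A y y + (a + b).
  by rewrite formDl !formDr -/a -/b; ring.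
have ii : - 'i * 'i = 1 :> C by rewrite mulNr -expr2 sqrCi opprK.
have h2 : form A (x + 'i *: y) (x + 'i *: y) =
   form A x x + form A y y + 'i * (a - b).
  rewrite formDl !formDr !formZl !formZr -/a -/b conjCi.
  by rewrite [- 'i * ('i * _)]mulrA ii mul1r; ring.
have rab : (a + b)^* = a + b.
  have := hr (x + y); rewrite h1 => /rpredB/(_ (rpredD (hr x) (hr y))).
  by rewrite addrC addKr => /CrealP.
have riab : ('i * (a - b))^* = 'i * (a - b).
  have := hr (x + 'i *: y); rewrite h2 => /rpredB/(_ (rpredD (hr x) (hr y))).
  by rewrite addrC addKr => /CrealP.
move: riab; rewrite rmorphM /= conjCi rmorphB /= => h.
have h' : b^* - a^* = a - b.
  by apply: (mulfI (neq0Ci C)); rewrite -h; ring.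
move: rab; rewrite rmorphD /= => rab.
have e : a^* + b^* + (b^* - a^*) = a + b + (a - b) by rewrite rab h'.
have e2 : 2%:R * b^* = 2%:R * a.
  by transitivity (a^* + b^* + (b^* - a^*)); [ring | rewrite e; ring].
have e3 : b^* = a by apply: (mulfI _ e2); rewrite pnatr_eq0.
by rewrite -e3 conjCK.
Qed.


Lemma real_form_herm m (A : 'M[C]_m) :
  (forall x, form A x x \is Num.real) -> adjmx A = A.
Proof.
move=> hr; apply/matrixP => a b; rewrite adjmxE.
by rewrite -!form_delta -form_real_herm.
Qed.

Lemma herm_form_real m (A : 'M[C]_m) x : adjmx A = A -> form A x x \is Num.real.
Proof. by move=> hA; rewrite CrealE -form_adj hA. Qed.

Lemma psd_real m (A : 'M[C]_m) x : psd A -> form A x x \is Num.real.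
Proof. by move=> pA; apply: ger0_real; apply: pA. Qed.

Lemma lin0 m p (f : 'M[C]_m -> 'M[C]_p) : lin f -> f 0 = 0.
Proof.
move=> lf; have := lf 1 0 0; rewrite scale1r addr0 scale1r => h.
by apply: (addrI (f 0)); rewrite addr0 -h.
Qed.
Lemma linD m p (f : 'M[C]_m -> 'M[C]_p) x y : lin f -> f (x + y) = f x + f y.
Proof. by move=> lf; have := lf 1 x y; rewrite !scale1r. Qed.
Lemma linZ m p (f : 'M[C]_m -> 'M[C]_p) c x : lin f -> f (c *: x) = c *: f x.
Proof. by move=> lf; have := lf c x 0; rewrite addr0 lin0 // addr0. Qed.
Lemma linN m p (f : 'M[C]_m -> 'M[C]_p) x : lin f -> f (- x) = - f x.
Proof. by move=> lf; rewrite -scaleN1r linZ // scaleN1r. Qed.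
Lemma linB m p (f : 'M[C]_m -> 'M[C]_p) x y : lin f -> f (x - y) = f x - f y.
Proof. by move=> lf; rewrite linD // linN. Qed.
Lemma lin_sum m p (f : 'M[C]_m -> 'M[C]_p) I (r : seq I) (F : I -> 'M[C]_m) :
  lin f -> f (\sum_(i <- r) F i) = \sum_(i <- r) f (F i).
Proof.
move=> lf; elim/big_rec2: _ => [|i y1 y2 _ <-]; first exact: lin0.
by rewrite linD.
Qed.

Section Blocks.
Variables n k : nat.

Definition ub (u : 'cV[C]_(n * k)) (i : 'I_n) : 'cV[C]_k :=
  \col_a u (mxtens_index (i, a)) 0.

Lemma sum_idx (F : 'I_(n * k) -> C) :
  \sum_p F p = \sum_(i < n) \sum_(a < k) F (mxtens_index (i, a)).
Proof.
rewrite (reindex (@mxtens_index n k)) /=; last first.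
  by exists (@mxtens_unindex n k) => x _; [apply: mxtens_indexK | apply: mxtens_unindexK].
by rewrite pair_big /=; apply: eq_bigr => -[i a].
Qed.

Lemma form_blk (M : 'M[C]_(n * k)) u v :
  form M u v = \sum_i \sum_j form (blk M i j) (ub u i) (ub v j).
Proof.
rewrite formE sum_idx; apply: eq_bigr => i _.
rewrite exchange_big /= sum_idx; apply: eq_bigr => j _.
rewrite exchange_big formE; apply: eq_bigr => a _; apply: eq_bigr => b _.
by rewrite !mxE.
Qed.

Lemma blk_amp (alpha : 'M[C]_k -> 'M[C]_k) (X : 'M[C]_(n * k)) i j :
  blk (amp alpha X) i j = alpha (blk X i j).
Proof. by apply/matrixP => a b; rewrite !mxE !mxtens_indexK. Qed.

Lemma blkD (X Y : 'M[C]_(n * k)) i j : blk (X + Y) i j = blk X i j + blk Y i j.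
Proof. by apply/matrixP => a b; rewrite !mxE. Qed.
Lemma blkZ c (X : 'M[C]_(n * k)) i j : blk (c *: X) i j = c *: blk X i j.
Proof. by apply/matrixP => a b; rewrite !mxE. Qed.
Lemma blkN (X : 'M[C]_(n * k)) i j : blk (- X) i j = - blk X i j.
Proof. by apply/matrixP => a b; rewrite !mxE. Qed.
Lemma blkB (X Y : 'M[C]_(n * k)) i j : blk (X - Y) i j = blk X i j - blk Y i j.
Proof. by rewrite blkD blkN. Qed.
Lemma blk0 i j : blk (0 : 'M[C]_(n * k)) i j = 0.
Proof. by apply/matrixP => a b; rewrite !mxE. Qed.
Lemma blk_adj (X : 'M[C]_(n * k)) i j : blk (adjmx X) i j = adjmx (blk X j i).
Proof. by apply/matrixP => a b; rewrite !mxE. Qed.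
Lemma blk1 i j : blk (1%:M : 'M[C]_(n * k)) i j = (i == j)%:R *: 1%:M.
Proof.
apply/matrixP => a b; rewrite !mxE.
have -> : (mxtens_index (i, a) == mxtens_index (j, b)) = (i == j) && (a == b).
  apply/eqP/andP => [/(can_inj (@mxtens_indexK n k)) [-> ->]|[/eqP -> /eqP ->]] //.
by case: (i == j); case: (a == b); rewrite /= ?mulr1 ?mulr0 ?mulr1n ?mulr0n.
Qed.

Lemma amp_lin (alpha : 'M[C]_k -> 'M[C]_k) : lin alpha -> lin (amp (m:=n) alpha).
Proof.
move=> la c X Y; apply/matrixP => p q; rewrite !mxE.
by rewrite blkD blkZ la !mxE.
Qed.

End Blocks.


Lemma amgm (u v : C) : 0 <= u -> 0 <= v -> u * v <= u ^+ 2 + v ^+ 2.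
Proof.
move=> hu hv.
have [h _] := real_leif_AGM2_scaled (ger0_real hu) (ger0_real hv).
rewrite sqrrD in h.
have huv : 0 <= u * v by apply: mulr_ge0.
have h2 : u * v *+ 2 <= u ^+ 2 + v ^+ 2.
  rewrite -subr_ge0.
  have -> : u ^+ 2 + v ^+ 2 - u * v *+ 2 = u ^+ 2 + u * v *+ 2 + v ^+ 2 - u * v *+ 4 by ring.
  by rewrite subr_ge0.
apply: le_trans h2; rewrite mulr2n lerDr //.
Qed.

Definition csum m (T : 'M[C]_m) := \sum_a \sum_b `|T a b|.

Lemma csum_ge0 m (T : 'M[C]_m) : 0 <= csum T.
Proof. by apply: sumr_ge0 => a _; apply: sumr_ge0 => b _. Qed.

Lemma row_le_csum m (T : 'M[C]_m) a : \sum_b `|T a b| <= csum T.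
Proof.
rewrite /csum [leRHS](bigD1 a) //= lerDl; apply: sumr_ge0 => a' _.
by apply: sumr_ge0.
Qed.

Lemma col_le_csum m (T : 'M[C]_m) b : \sum_a `|T a b| <= csum T.
Proof.
rewrite /csum exchange_big [leRHS](bigD1 b) //= lerDl; apply: sumr_ge0 => a' _.
by apply: sumr_ge0.
Qed.

Lemma csumN m (T : 'M[C]_m) : csum (- T) = csum T.
Proof. by apply: eq_bigr => a _; apply: eq_bigr => b _; rewrite mxE normrN. Qed.

Lemma form1 m (x : 'cV[C]_m) : form 1%:M x x = \sum_a `|x a 0| ^+ 2.
Proof.
rewrite formE; apply: eq_bigr => a _.
rewrite (bigD1 a) //= big1 ?addr0; last first.
  by move=> b /negPf nb; rewrite mxE eq_sym nb mulr0n mulr0 mul0r.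
by rewrite mxE eqxx mulr1n mulr1 normCK mulrC.
Qed.

Lemma psd1 m : psd (1%:M : 'M[C]_m).
Proof. by move=> x; rewrite -[X in 0 <= X]/(form 1%:M x x) form1; apply: sumr_ge0 => a _; apply: exprn_ge0. Qed.

Lemma herm_bound m (T : 'M[C]_m) x :
  adjmx T = T -> form T x x <= 2%:R * csum T * form 1%:M x x.
Proof.
move=> hT; have rT := herm_form_real x hT.
apply: le_trans (real_ler_norm rT) _.
rewrite formE; apply: le_trans; first exact: ler_norm_sum.
apply: le_trans; first by apply: ler_sum => a _; exact: ler_norm_sum.
have e : forall a b, `|(x a 0)^* * T a b * x b 0| =
    `|T a b| * (`|x a 0| * `|x b 0|).
  by move=> a b; rewrite !normrM norm_conjC; ring.
under eq_bigr do under eq_bigr do rewrite e.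
apply: (@le_trans _ _ (\sum_a \sum_b `|T a b| * (`|x a 0| ^+ 2 + `|x b 0| ^+ 2))).
  apply: ler_sum => a _; apply: ler_sum => b _.
  by apply: ler_wpM2l => //; apply: amgm.
under eq_bigr do under eq_bigr do rewrite mulrDr.
under eq_bigr do rewrite big_split /=.
rewrite big_split /= form1.
have -> : 2%:R * csum T * (\sum_a `|x a 0| ^+ 2) =
   \sum_a csum T * `|x a 0| ^+ 2 + \sum_a csum T * `|x a 0| ^+ 2.
  by rewrite -mulrA mulr_sumr mulr_natl mulr2n.
apply: lerD.
  apply: ler_sum => a _; rewrite -mulr_suml; apply: ler_wpM2r; last exact: row_le_csum.
  exact: exprn_ge0 (normr_ge0 _).
rewrite exchange_big /=; apply: ler_sum => b _; rewrite -mulr_suml.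
apply: ler_wpM2r; last exact: col_le_csum.
exact: exprn_ge0 (normr_ge0 _).
Qed.


Lemma adjmx1 m : adjmx (1%:M : 'M[C]_m) = 1%:M.
Proof. by rewrite adjmx_scalar rmorph1. Qed.

Section PosMap.
Variables (m : nat) (alpha : 'M[C]_m -> 'M[C]_m).
Hypothesis pa : positive_map alpha.
Let la := pa.1.

Lemma pm_upper T x : adjmx T = T ->
  form (alpha T) x x <= 2%:R * csum T * form (alpha 1%:M) x x.
Proof.
move=> hT; set c := 2%:R * csum T.
have p1 : psd (c *: 1%:M - T).
  move=> y; rewrite -[X in 0 <= X]/(form _ y y) formBA formZA subr_ge0.
  exact: herm_bound.
have := pa.2 _ p1 x; rewrite -[X in 0 <= X -> _]/(form _ x x).
by rewrite linB // linZ // formBA formZA subr_ge0.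
Qed.

Lemma pm_lower T x : adjmx T = T ->
  - form (alpha T) x x <= 2%:R * csum T * form (alpha 1%:M) x x.
Proof.
move=> hT; have hT' : adjmx (- T) = - T by rewrite adjmxN hT.
have := pm_upper x hT'; rewrite csumN linN // formNA //.
Qed.

Lemma pm_psd1 : psd (alpha 1%:M).
Proof. exact: pa.2 (@psd1 m). Qed.

Lemma pm_real T x : adjmx T = T -> form (alpha T) x x \is Num.real.
Proof.
move=> hT; set c := 2%:R * csum T * form (alpha 1%:M) x x.
have rc : c \is Num.real.
  apply: ger0_real; apply: mulr_ge0; last exact: pm_psd1.
  by apply: mulr_ge0; [apply: ler0n | apply: csum_ge0].
have := pm_upper x hT; rewrite -subr_ge0 -/c => /ger0_real h.
by have := rpredB rc h; rewrite opprB addrC subrK.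
Qed.

Lemma pm_herm T : adjmx T = T -> adjmx (alpha T) = alpha T.
Proof. by move=> hT; apply: real_form_herm => x; apply: pm_real. Qed.

Lemma pm_adj Z : alpha (adjmx Z) = adjmx (alpha Z).
Proof.
set h1 := Z + adjmx Z; set h2 := 'i *: (adjmx Z - Z).
have H1 : adjmx h1 = h1 by rewrite /h1 adjmxD adjmxK addrC.
have H2 : adjmx h2 = h2.
  by rewrite /h2 adjmxZ adjmxB adjmxK conjCi scaleNr -scalerN opprB.
have ii : 'i * 'i = -1 :> C by rewrite -expr2 sqrCi.
have two : (2%:R : C) != 0 by rewrite pnatr_eq0.
have EZ : Z = 2%:R^-1 *: (h1 + 'i *: h2).
  apply/matrixP => a b; rewrite !mxE mulrA ii; by field.
have EZ' : adjmx Z = 2%:R^-1 *: (h1 - 'i *: h2).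
  apply/matrixP => a b; rewrite !mxE mulrA ii; by field.
have -> : alpha Z = 2%:R^-1 *: (alpha h1 + 'i *: alpha h2).
  by rewrite [in LHS]EZ (linZ _ _ la) (linD _ _ la) (linZ _ _ la).
rewrite EZ' (linZ _ _ la) (linB _ _ la) (linZ _ _ la).
rewrite adjmxZ adjmxD adjmxZ (pm_herm H1) (pm_herm H2) conjCi.
by rewrite rmorphV ?unitfE //= conjC_nat scaleNr.
Qed.

End PosMap.

Lemma herm_cross m (A D : 'M[C]_m) (c : C) :
  adjmx A = A -> (forall x, form A x x <= c * form D x x) ->
  (forall x, - form A x x <= c * form D x x) ->
  forall x y, form A x y + (form A x y)^* <= c * (form D x x + form D y y).
Proof.
move=> hA up lo x y.
have -> : (form A x y)^* = form A y x by rewrite -form_adj hA.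
have e1 : form A (x + y) (x + y) - form A (x - y) (x - y) =
    2%:R * (form A x y + form A y x).
  rewrite !formDl !formDr !formNl !formNr; ring.
have e2 : form D (x + y) (x + y) + form D (x - y) (x - y) =
    2%:R * (form D x x + form D y y).
  rewrite !formDl !formDr !formNl !formNr; ring.
have : 2%:R * (form A x y + form A y x) <= 2%:R * (c * (form D x x + form D y y)).
  rewrite -e1 mulrCA -e2 mulrDr; apply: lerD; first exact: up.
  exact: lo.
by rewrite ler_pM2l ?ltr0n.
Qed.


Lemma row_le_sum2 m (F : 'I_m -> 'I_m -> C) i :
  (forall i j, 0 <= F i j) -> \sum_j F i j <= \sum_i \sum_j F i j.
Proof.
move=> F0; rewrite [leRHS](bigD1 i) //= lerDl; apply: sumr_ge0 => i' _.
by apply: sumr_ge0.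
Qed.

Lemma col_le_sum2 m (F : 'I_m -> 'I_m -> C) j :
  (forall i j, 0 <= F i j) -> \sum_i F i j <= \sum_i \sum_j F i j.
Proof.
move=> F0; rewrite [leRHS]exchange_big [leRHS](bigD1 j) //= lerDl.
by apply: sumr_ge0 => i' _; apply: sumr_ge0.
Qed.

Definition hh1 m (Z : 'M[C]_m) := Z + adjmx Z.
Definition hh2 m (Z : 'M[C]_m) := 'i *: (adjmx Z - Z).
Definition Kc m (Z : 'M[C]_m) := 2%:R * csum (hh1 Z) + 2%:R * csum (hh2 Z).

Lemma hh1_herm m (Z : 'M[C]_m) : adjmx (hh1 Z) = hh1 Z.
Proof. by rewrite /hh1 adjmxD adjmxK addrC. Qed.
Lemma hh2_herm m (Z : 'M[C]_m) : adjmx (hh2 Z) = hh2 Z.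
Proof. by rewrite /hh2 adjmxZ adjmxB adjmxK conjCi scaleNr -scalerN opprB. Qed.
Lemma hh_dec m (Z : 'M[C]_m) : Z = 2%:R^-1 *: (hh1 Z + 'i *: hh2 Z).
Proof.
have ii : 'i * 'i = -1 :> C by rewrite -expr2 sqrCi.
have two : (2%:R : C) != 0 by rewrite pnatr_eq0.
by apply/matrixP => a b; rewrite !mxE mulrA ii; field.
Qed.
Lemma Kc_ge0 m (Z : 'M[C]_m) : 0 <= Kc Z.
Proof. by apply: addr_ge0; apply: mulr_ge0 => //; apply: csum_ge0. Qed.

Section Cof.
Variables n k : nat.

Definition sX (X : 'M[C]_(n * k)) := \sum_i \sum_j Kc (blk X i j).

Lemma sX_ge0 X : 0 <= sX X.
Proof. by apply: sumr_ge0 => i _; apply: sumr_ge0 => j _; apply: Kc_ge0. Qed.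

Variable alpha : 'M[C]_k -> 'M[C]_k.
Hypothesis pa : positive_map alpha.
Let la := pa.1.

Lemma amp_herm (X : 'M[C]_(n * k)) : adjmx X = X -> adjmx (amp alpha X) = amp alpha X.
Proof.
move=> hX; apply/matrixP => p q.
case: (mxtens_indexP p) => i a; case: (mxtens_indexP q) => j b.
transitivity (adjmx (alpha (blk X j i)) a b).
  by rewrite adjmxE !mxE !mxtens_indexK.
rewrite -pm_adj // -blk_adj hX.
by rewrite [RHS]mxE !mxtens_indexK.
Qed.

Lemma form_amp1 (u : 'cV[C]_(n * k)) :
  form (amp alpha 1%:M) u u = \sum_i form (alpha 1%:M) (ub u i) (ub u i).
Proof.
rewrite form_blk; apply: eq_bigr => i _.
rewrite (bigD1 i) //= big1 ?addr0; last first.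
  by move=> j /negPf nj; rewrite blk_amp blk1 eq_sym nj (linZ _ _ la) formZA mul0r.
by rewrite blk_amp blk1 eqxx (linZ _ _ la) formZA mul1r.
Qed.

Lemma pair_bound (Z : 'M[C]_k) x y :
  form (alpha Z) x y + (form (alpha Z) x y)^* <=
  Kc Z * (form (alpha 1%:M) x x + form (alpha 1%:M) y y).
Proof.
set D := alpha 1%:M.
have qi : form D ('i *: y) ('i *: y) = form D y y.
  by rewrite formZl formZr conjCi mulrA mulNr -expr2 sqrCi opprK mul1r.
have c1 := herm_cross (pm_herm pa (hh1_herm Z)) (fun x => pm_upper pa x (hh1_herm Z))
   (fun x => pm_lower pa x (hh1_herm Z)) x y.
have c2 := herm_cross (pm_herm pa (hh2_herm Z)) (fun x => pm_upper pa x (hh2_herm Z))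
   (fun x => pm_lower pa x (hh2_herm Z)) x ('i *: y).
rewrite qi -/D formZr in c2; rewrite -/D in c1.
set w1 := form (alpha (hh1 Z)) x y in c1; set w2 := form (alpha (hh2 Z)) x y in c2.
have -> : form (alpha Z) x y = 2%:R^-1 * (w1 + 'i * w2).
  by rewrite {1}(hh_dec Z) (linZ _ _ la) (linD _ _ la) (linZ _ _ la) formZA formDA formZA.
rewrite rmorphM rmorphV ?unitfE ?pnatr_eq0 //= conjC_nat -mulrDr rmorphD /=.
set S := (w1 + 'i * w2 + (w1^* + ('i * w2)^*)).
have eS : S = (w1 + w1^*) + ('i * w2 + ('i * w2)^*) by rewrite /S; ring.
have hS : S <= Kc Z * (form D x x + form D y y).
  by rewrite eS /Kc mulrDl; apply: lerD.
have S0 : 0 <= Kc Z * (form D x x + form D y y).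
  apply: mulr_ge0; first exact: Kc_ge0.
  by apply: addr_ge0; apply: pm_psd1.
apply: (@le_trans _ _ (2%:R^-1 * (Kc Z * (form D x x + form D y y)))).
  by apply: ler_wpM2l => //; rewrite invr_ge0 ler0n.
apply: ler_piMl => //; rewrite invf_le1 ?ltr0n // ler1n //.
Qed.

Lemma cof_psd (X : 'M[C]_(n * k)) t :
  adjmx X = X -> sX X <= t -> psd (amp alpha (t *: 1%:M - X)).
Proof.
move=> hX st u; rewrite -[X in 0 <= X]/(form _ u u).
have lA : lin (amp (m:=n) alpha) := amp_lin la.
rewrite (linB _ _ lA) (linZ _ _ lA) formBA formZA form_amp1.
set D := alpha 1%:M.
set Qs := \sum_i form D (ub u i) (ub u i).
set Q := form (amp alpha X) u u.
have q0 : forall i, 0 <= form D (ub u i) (ub u i) by move=> i; apply: pm_psd1.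
have Qs0 : 0 <= Qs by apply: sumr_ge0 => i _.
have rQ : Q \is Num.real by apply: herm_form_real; apply: amp_herm.
have QQ : Q + Q^* <= sX X * Qs + sX X * Qs.
  rewrite /Q form_blk rmorph_sum -big_split /=.
  under eq_bigr do rewrite rmorph_sum -big_split /=.
  apply: (@le_trans _ _ (\sum_i \sum_j Kc (blk X i j) *
     (form D (ub u i) (ub u i) + form D (ub u j) (ub u j)))).
    apply: ler_sum => i _; apply: ler_sum => j _.
    by rewrite blk_amp; apply: pair_bound.
  under eq_bigr do under eq_bigr do rewrite mulrDr.
  under eq_bigr do rewrite big_split /=.
  rewrite big_split /=; apply: lerD.
    rewrite /Qs mulr_sumr; apply: ler_sum => i _; rewrite -mulr_suml.
    apply: ler_wpM2r => //; apply: row_le_sum2 => a b; exact: Kc_ge0.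
  rewrite exchange_big /= /Qs mulr_sumr; apply: ler_sum => j _; rewrite -mulr_suml.
  apply: ler_wpM2r => //; apply: col_le_sum2 => a b; exact: Kc_ge0.
move: QQ; rewrite (CrealP rQ) => QQ.
have : 2%:R * Q <= 2%:R * (sX X * Qs) by rewrite !mulr_natl !mulr2n.
rewrite ler_pM2l ?ltr0n // => {}QQ.
rewrite subr_ge0; apply: le_trans QQ _.
by apply: ler_wpM2r.
Qed.

End Cof.

End MatA.

Definition rmx (R : realType) (N : nat) := 'M[R[i]]_N.
HB.instance Definition _ (R : realType) N := GRing.Zmodule.on (rmx R N).
Section RS. Variables (R : realType) (N : nat).
Definition rscale (r : R) (x : rmx R N) : rmx R N := (r%:C)%C *: (x : 'M[R[i]]_N).
Fact rscaleA a b v : rscale a (rscale b v) = rscale (a * b) v.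
Proof. by rewrite /rscale scalerA -rmorphM. Qed.
Fact rscale1 : left_id 1 rscale.
Proof. by move=> v; rewrite /rscale rmorph1 scale1r. Qed.
Fact rscaleDr : right_distributive rscale +%R.
Proof. by move=> a u v; rewrite /rscale scalerDr. Qed.
Fact rscaleDl v : {morph rscale^~ v : a b / a + b}.
Proof. by move=> a b; rewrite /rscale rmorphD scalerDl. Qed.
End RS.
HB.instance Definition _ (R : realType) N :=
  GRing.Zmodule_isLmodule.Build R (rmx R N) (@rscaleA R N) (@rscale1 R N)
    (@rscaleDr R N) (@rscaleDl R N).

Section Final.
Variable R : realType.
Local Notation C := R[i].

Lemma rscaleE N (r : R) (x : rmx R N) : r *: x = (r%:C)%C *: (x : 'M[C]_N).
Proof. by []. Qed.

Lemma addVE N (x y : rmx R N) : x + y = (x : 'M[C]_N) + (y : 'M[C]_N).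
Proof. by []. Qed.

Lemma RCD (a b : R) : ((a + b)%:C)%C = (a%:C)%C + (b%:C)%C :> R[i].
Proof. by apply/eqP; rewrite eq_complex /= addr0 !eqxx. Qed.
Lemma RCM (a b : R) : ((a * b)%:C)%C = (a%:C)%C * (b%:C)%C :> R[i].
Proof. by apply/eqP; rewrite eq_complex /= !mulr0 !mul0r subr0 addr0 !eqxx. Qed.
Lemma RCN (a : R) : ((- a)%:C)%C = - (a%:C)%C :> R[i].
Proof. by apply/eqP; rewrite eq_complex /= oppr0 !eqxx. Qed.

Lemma real_C (r : R) : (r%:C)%C \is Num.real.
Proof. by apply/complex_realP; exists r. Qed.

Lemma conj_C (r : R) : ((r%:C)%C)^* = (r%:C)%C.
Proof. exact: CrealP (real_C r). Qed.

Lemma ReM (r : R) (z : C) : complex.Re ((r%:C)%C * z) = r * complex.Re z.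
Proof. by case: z => a b /=; rewrite mul0r subr0. Qed.
Lemma ReD (z w : C) : complex.Re (z + w) = complex.Re z + complex.Re w.
Proof. by case: z; case: w. Qed.

Lemma tensmxZl m1 p1 m2 p2 c (A : 'M[C]_(m1, p1)) (B : 'M[C]_(m2, p2)) :
  (c *: A) *t B = c *: (A *t B).
Proof. by apply/matrixP => i j; rewrite !mxE mulrA. Qed.
Lemma tensmxZr m1 p1 m2 p2 c (A : 'M[C]_(m1, p1)) (B : 'M[C]_(m2, p2)) :
  A *t (c *: B) = c *: (A *t B).
Proof. by apply/matrixP => i j; rewrite !mxE mulrCA. Qed.
Lemma tensmxDl m1 p1 m2 p2 (A A' : 'M[C]_(m1, p1)) (B : 'M[C]_(m2, p2)) :
  (A + A') *t B = A *t B + A' *t B.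
Proof. by apply/matrixP => i j; rewrite !mxE mulrDl. Qed.
Lemma tensmxDr m1 p1 m2 p2 (A : 'M[C]_(m1, p1)) (B B' : 'M[C]_(m2, p2)) :
  A *t (B + B') = A *t B + A *t B'.
Proof. by apply/matrixP => i j; rewrite !mxE mulrDr. Qed.
Lemma tensmxNr m1 p1 m2 p2 (A : 'M[C]_(m1, p1)) (B : 'M[C]_(m2, p2)) :
  A *t (- B) = - (A *t B).
Proof. by apply/matrixP => i j; rewrite !mxE mulrN. Qed.
Lemma tensmx_sumr m1 p1 m2 p2 (A : 'M[C]_(m1, p1)) I (r : seq I) (F : I -> 'M[C]_(m2, p2)) :
  A *t (\sum_(i <- r) F i) = \sum_(i <- r) A *t F i.
Proof.
elim/big_rec2: _ => [|i y1 y2 _ <-]; first exact: tensmx0.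
by rewrite tensmxDr.
Qed.

Lemma trE m (M b : 'M[C]_m) : \tr (M *m b^T) = \sum_p \sum_q M p q * b p q.
Proof. by apply: eq_bigr => p _; rewrite mxE; apply: eq_bigr => q _; rewrite mxE. Qed.

Lemma idx_eq n k (i j : 'I_n) (a b : 'I_k) :
  (mxtens_index (i, a) == mxtens_index (j, b)) = (i == j) && (a == b).
Proof.
apply/eqP/andP => [/(can_inj (@mxtens_indexK n k)) [-> ->]|[/eqP -> /eqP ->]] //.
Qed.

Lemma tens11 n k : (1%:M : 'M[C]_n) *t (1%:M : 'M[C]_k) = 1%:M.
Proof.
apply/matrixP => p q.
case: (mxtens_indexP p) => i a; case: (mxtens_indexP q) => j b.
rewrite tensmxE !mxE idx_eq.
by case: (i == j); case: (a == b); rewrite /= ?mulr1n ?mulr0n ?mulr1 ?mulr0.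
Qed.

Definition catf N1 N2 T (f1 : 'I_N1 -> T) (f2 : 'I_N2 -> T) (i : 'I_(N1 + N2)) : T :=
  match split i with inl j => f1 j | inr j => f2 j end.
Lemma catf_l N1 N2 T (f1 : 'I_N1 -> T) (f2 : 'I_N2 -> T) j :
  catf f1 f2 (lshift N2 j) = f1 j.
Proof. by rewrite /catf -[lshift N2 j]/(unsplit (inl _ j)) unsplitK. Qed.
Lemma catf_r N1 N2 T (f1 : 'I_N1 -> T) (f2 : 'I_N2 -> T) j :
  catf f1 f2 (rshift N1 j) = f2 j.
Proof. by rewrite /catf -[rshift N1 j]/(unsplit (inr _ j)) unsplitK. Qed.

Lemma sum_cat (V : nmodType) N1 N2 T1 T2 (G : T1 -> T2 -> V)
   (a1 : 'I_N1 -> T1) (a2 : 'I_N2 -> T1) (b1 : 'I_N1 -> T2) (b2 : 'I_N2 -> T2) :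
  \sum_(i < N1 + N2) G (catf a1 a2 i) (catf b1 b2 i) =
  \sum_(i < N1) G (a1 i) (b1 i) + \sum_(i < N2) G (a2 i) (b2 i).
Proof.
rewrite big_split_ord /=; congr (_ + _); apply: eq_bigr => i _.
  by rewrite !catf_l.
by rewrite !catf_r.
Qed.

Variables (n k : nat) (Cc : set ('M[C]_k -> 'M[C]_k)) (B : set 'M[C]_n)
  (phi : 'M[C]_n -> 'M[C]_k).
Hypotheses (mc : mapping_cone Cc) (hB : unital_Cstar_subalg B)
  (lphi : lin_on B phi) (cpos : C_positive B Cc phi).

Local Notation M := 'M[C]_(n * k).

Lemma Cc_pos alpha : Cc alpha -> positive_map alpha.
Proof. by case: mc => h _ _ _ _; apply: h. Qed.

Lemma B1 : B 1%:M. Proof. by case: hB. Qed.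
Lemma BD x y : B x -> B y -> B (x + y). Proof. by case: hB => _ h _ _ _; apply: h. Qed.
Lemma BZ c x : B x -> B (c *: x). Proof. by case: hB => _ _ h _ _; apply: h. Qed.
Lemma Badj x : B x -> B (adjmx x). Proof. by case: hB => _ _ _ _ h; apply: h. Qed.

Definition PP (X : M) := inP Cc X.

Lemma PPD X Y : PP X -> PP Y -> PP (X + Y).
Proof.
move=> [hX pX] [hY pY]; split; first by rewrite /Defs.hermitian adjmxD hX hY.
move=> alpha ca; have la := (Cc_pos ca).1.
have lA : lin (amp (m:=n) alpha) := amp_lin la.
move=> u; rewrite -[X in 0 <= X]/(form _ u u) (linD _ _ lA) formDA.
by apply: addr_ge0; [apply: pX | apply: pY].
Qed.

Lemma PPZ c X : 0 <= c -> PP X -> PP (c *: X).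
Proof.
move=> c0 [hX pX]; split.
  by rewrite /Defs.hermitian adjmxZ hX (CrealP (ger0_real c0)).
move=> alpha ca; have la := (Cc_pos ca).1.
have lA : lin (amp (m:=n) alpha) := amp_lin la.
move=> u; rewrite -[X in 0 <= X]/(form _ u u) (linZ _ _ lA) formZA.
by apply: mulr_ge0 => //; apply: pX.
Qed.

Lemma PP_cof (X : M) t : Defs.hermitian X -> sX X <= t -> PP (t *: 1%:M - X).
Proof.
move=> hX st; have t0 : 0 <= t := le_trans (sX_ge0 X) st.
split.
  by rewrite /Defs.hermitian adjmxB adjmxZ adjmx1 hX (CrealP (ger0_real t0)).
by move=> alpha ca; apply: cof_psd => //; apply: Cc_pos.
Qed.

Lemma PP1 : PP 1%:M.
Proof.
split; first exact: adjmx1.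
move=> alpha ca u; rewrite -[X in 0 <= X]/(form _ u u) form_amp1; last exact: Cc_pos.
by apply: sumr_ge0 => i _; apply: pm_psd1; apply: Cc_pos.
Qed.

Definition isrep (X : M) N (a : 'I_N -> 'M[C]_n) (b : 'I_N -> 'M[C]_k) :=
  (forall i, B (a i)) /\ X = \sum_i a i *t b i.
Definition WW (X : M) := exists N a b, @isrep X N a b.
Definition rval N (a : 'I_N -> 'M[C]_n) (b : 'I_N -> 'M[C]_k) :=
  \sum_i \tr (phi (a i) *m (b i)^T).

Lemma rval_uniq X N1 a1 b1 N2 a2 b2 :
  @isrep X N1 a1 b1 -> @isrep X N2 a2 b2 -> rval a1 b1 = rval a2 b2.
Proof.
have key : forall N1 a1 b1 N2 a2 b2, @isrep X N1 a1 b1 -> @isrep X N2 a2 b2 ->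
    0 <= rval a1 b1 - rval a2 b2.
  move=> {N1 a1 b1 N2 a2 b2} N1 a1 b1 N2 a2 b2 [Ba1 e1] [Ba2 e2].
  have := cpos (a := catf a1 a2) (b := catf b1 (fun i => - b2 i)).
  rewrite /rval (sum_cat (fun a b => \tr (phi a *m b^T))).
  rewrite (sum_cat (fun a b => a *t b)).
  have -> : \sum_(i < N2) \tr (phi (a2 i) *m (- b2 i)^T) =
      - \sum_(i < N2) \tr (phi (a2 i) *m (b2 i)^T).
    rewrite -sumrN; apply: eq_bigr => i _; rewrite !trE -sumrN.
    by apply: eq_bigr => p _; rewrite -sumrN; apply: eq_bigr => q _; rewrite mxE mulrN.
  apply.
    by move=> i; rewrite /catf; case: split => j.
  have -> : \sum_(i < N2) a2 i *t - b2 i = - \sum_(i < N2) a2 i *t b2 i.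
    by rewrite -sumrN; apply: eq_bigr => i _; rewrite tensmxNr.
  rewrite -e1 -e2 subrr; split; first exact: adjmx0.
  move=> alpha ca; have la := (Cc_pos ca).1.
  have lA : lin (amp (m:=n) alpha) := amp_lin la.
  by rewrite (lin0 lA) => u; rewrite -[X in 0 <= X]/(form _ u u) form0A.
move=> r1 r2; apply/eqP; rewrite eq_le.
by rewrite -subr_ge0 (key _ _ _ _ _ _ r2 r1) -subr_ge0 (key _ _ _ _ _ _ r1 r2).
Qed.


Definition rtype := {N : nat & (('I_N -> 'M[C]_n) * ('I_N -> 'M[C]_k))%type}.
Definition fW (X : M) : C :=
  match pselect (exists r : rtype, isrep X (projT2 r).1 (projT2 r).2) with
  | left h => let r := projT1 (cid h) in rval (projT2 r).1 (projT2 r).2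
  | right _ => 0 end.

Lemma fW_rep X N a b : @isrep X N a b -> fW X = rval a b.
Proof.
move=> r; rewrite /fW; case: pselect => [h|nh]; last first.
  by exfalso; apply: nh; exists (existT _ N (a, b)).
by case: (cid h) => [[N' [a' b']] /= r']; apply: rval_uniq r' r.
Qed.

Lemma WWlin c X Y : WW X -> WW Y -> WW (c *: X + Y) /\ fW (c *: X + Y) = c * fW X + fW Y.
Proof.
move=> [N1 [a1 [b1 r1]]] [N2 [a2 [b2 r2]]].
have r : isrep (c *: X + Y) (catf a1 a2) (catf (fun i => c *: b1 i) b2).
  split.
    by move=> i; rewrite /catf; case: split => j; [apply: r1.1 | apply: r2.1].
  rewrite (sum_cat (fun a b => a *t b)) -r2.2 r1.2 scaler_sumr; congr (_ + _).
  by apply: eq_bigr => i _; rewrite tensmxZr.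
split; first by exists (N1 + N2)%N, (catf a1 a2), (catf (fun i => c *: b1 i) b2).
rewrite (fW_rep r) (fW_rep r1) (fW_rep r2) /rval.
rewrite (sum_cat (fun a b => \tr (phi a *m b^T))) mulr_sumr; congr (_ + _).
apply: eq_bigr => i _; rewrite !trE mulr_sumr; apply: eq_bigr => p _.
by rewrite mulr_sumr; apply: eq_bigr => q _; rewrite mxE mulrCA.
Qed.

Lemma rep0 : isrep 0 (fun i : 'I_0 => 0) (fun i => 0).
Proof. by split; [case | rewrite big_ord0]. Qed.
Lemma WW0 : WW 0. Proof. by exists 0%N, (fun _ => 0), (fun _ => 0); apply: rep0. Qed.
Lemma fW0 : fW 0 = 0. Proof. by rewrite (fW_rep rep0) /rval big_ord0. Qed.

Lemma WWD X Y : WW X -> WW Y -> WW (X + Y).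
Proof. by move=> wX wY; have [] := WWlin 1 wX wY; rewrite scale1r. Qed.
Lemma WWZ c X : WW X -> WW (c *: X).
Proof. by move=> wX; have [] := WWlin c wX WW0; rewrite addr0. Qed.
Lemma fWD X Y : WW X -> WW Y -> fW (X + Y) = fW X + fW Y.
Proof. by move=> wX wY; have [] := WWlin 1 wX wY; rewrite scale1r mul1r. Qed.
Lemma fWZ c X : WW X -> fW (c *: X) = c * fW X.
Proof. by move=> wX; have [] := WWlin c wX WW0; rewrite addr0 fW0 addr0. Qed.

Lemma WWadj X : WW X -> WW (adjmx X).
Proof.
move=> [N [a [b [Ba e]]]]; exists N, (fun i => adjmx (a i)), (fun i => adjmx (b i)).
split; first by move=> i; apply: Badj.
by rewrite e adjmx_sum; apply: eq_bigr => i _; rewrite adjmx_tens.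
Qed.

Lemma rep_t x b : B x -> @isrep (x *t b) 1 (fun _ => x) (fun _ => b).
Proof. by move=> Bx; split => //; rewrite big_ord1. Qed.

Lemma WW1 : WW 1%:M.
Proof. by exists 1%N, (fun _ => 1%:M), (fun _ => 1%:M); rewrite -tens11; apply: rep_t B1. Qed.

Lemma fW_pos X : WW X -> PP X -> 0 <= fW X.
Proof.
move=> [N [a [b [Ba e]]]] pX; rewrite (fW_rep (conj Ba e)); apply: cpos => //.
by rewrite -e.
Qed.

Lemma fW_real X : WW X -> Defs.hermitian X -> fW X \is Num.real.
Proof.
move=> wX hX; set t := sX X.
have t0 : 0 <= t := sX_ge0 X.
have wN : WW (- X) by rewrite -scaleN1r; apply: WWZ.
have w1 := WW1; have wt : WW (t *: 1%:M) := WWZ t w1.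
have e : fW (t *: 1%:M - X) = t * fW 1%:M - fW X.
  rewrite (fWD wt wN) (fWZ t w1); congr (_ + _).
  by have := fWZ (-1) wX; rewrite scaleN1r mulN1r.
have p : 0 <= t * fW 1%:M - fW X.
  by rewrite -e; apply: fW_pos; [apply: WWD | apply: PP_cof].
have r1 : t * fW 1%:M \is Num.real.
  by apply: ger0_real; apply: mulr_ge0 => //; apply: fW_pos; [apply: WW1 | apply: PP1].
by have := rpredB r1 (ger0_real p); rewrite opprB addrC subrK.
Qed.


Local Notation V := (rmx R (n * k)).
Definition PV : set V := fun X => PP X.
Definition WV : set V := fun X => WW X /\ Defs.hermitian X.
Definition fV (X : V) : R := complex.Re (fW X).

Lemma PVD (x y : V) : PV x -> PV y -> PV (x + y).
Proof. exact: PPD. Qed.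
Lemma PVZ (r : R) (x : V) : 0 <= r -> PV x -> PV (r *: x).
Proof. by move=> r0 px; rewrite rscaleE; apply: PPZ => //; rewrite ler0c. Qed.

Lemma WV_sub : subsp WV.
Proof.
split; first by split; [apply: WW0 | apply: adjmx0].
move=> r x y [wx hx] [wy hy]; rewrite rscaleE; split; first by have [] := WWlin (r%:C)%C wx wy.
by rewrite /Defs.hermitian adjmxD adjmxZ hx hy conj_C.
Qed.

Lemma fV_lin : linon WV fV.
Proof.
move=> r x y [wx hx] [wy hy]; rewrite /fV rscaleE.
by have [_ ->] := WWlin (r%:C)%C wx wy; rewrite ReD ReM.
Qed.

Lemma fV_pos : posP PV WV fV.
Proof.
move=> x [wx hx] px; have := fW_pos wx px.
by rewrite lecE => /andP [_].
Qed.

Lemma cof_herm (v : V) : Defs.hermitian v -> cof PV WV v.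
Proof.
move=> hv; exists ((sX v) *: (1%:M : M)); split; last exact: PP_cof.
split; first by apply: WWZ; apply: WW1.
by rewrite /Defs.hermitian adjmxZ adjmx1 (CrealP (ger0_real (sX_ge0 v))).
Qed.

Definition hpart (X : M) : M := 2%:R^-1 *: (X + adjmx X).

Lemma conj_half : (2%:R^-1 : C)^* = 2%:R^-1.
Proof. by rewrite rmorphV ?unitfE ?pnatr_eq0 //= conjC_nat. Qed.

Lemma hpart_herm X : Defs.hermitian (hpart X).
Proof. by rewrite /Defs.hermitian /hpart adjmxZ adjmxD adjmxK conj_half addrC. Qed.

Lemma hpart_id X : Defs.hermitian X -> hpart X = X.
Proof.
move=> hX; rewrite /hpart hX; apply/matrixP => a b; rewrite !mxE.
by field.
Qed.

Lemma hpartD X Y : hpart (X + Y) = hpart X + hpart Y.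
Proof. by rewrite /hpart adjmxD -scalerDr addrACA. Qed.
Lemma hpartN X : hpart (- X) = - hpart X.
Proof. by rewrite /hpart adjmxN -opprD scalerN. Qed.
Lemma hpartZr (r : R) X : hpart ((r%:C)%C *: X) = (r%:C)%C *: hpart X.
Proof. by apply/matrixP => a b; rewrite !mxE rmorphM /= conj_C; ring. Qed.
Lemma hpart0 : hpart 0 = 0.
Proof. by rewrite /hpart adjmx0 addr0 scaler0. Qed.
Lemma hpart_sum I (r : seq I) (F : I -> M) :
  hpart (\sum_(i <- r) F i) = \sum_(i <- r) hpart (F i).
Proof.
elim/big_rec2: _ => [|i y1 y2 _ <-]; first exact: hpart0.
by rewrite hpartD.
Qed.

Lemma hpartW X : WW X -> WW (hpart X).
Proof. by move=> wX; apply: WWZ; apply: WWD => //; apply: WWadj. Qed.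

Lemma E_sum (E : set V) (sE : subsp E) I (r : seq I) (F : I -> M) :
  (forall i, E (F i)) -> E (\sum_(i <- r) F i).
Proof.
move=> HF; elim: r => [|a r IH]; first by rewrite big_nil; exact: sE.1.
by rewrite big_cons; exact: (subspD sE (HF a) IH).
Qed.

Definition slist : seq V :=
  [seq (hpart (delta_mx pq.1 pq.2) : V) | pq : 'I_(n * k) * 'I_(n * k)] ++
  [seq (hpart ('i *: delta_mx pq.1 pq.2) : V) | pq : 'I_(n * k) * 'I_(n * k)].

Lemma herm_ext (X : V) : Defs.hermitian X -> ext WV slist X.
Proof.
move=> hX; have sE := ext_subsp slist WV_sub.
set E := ext WV slist in sE *.
have m1 : forall p q, E (hpart (delta_mx p q)).
  move=> p q; apply: ext_mem; first exact: WV_sub. rewrite /slist mem_cat; apply/orP; left.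
  by apply/mapP; exists (p, q); rewrite ?mem_enum.
have m2 : forall p q, E (hpart ('i *: delta_mx p q)).
  move=> p q; apply: ext_mem; first exact: WV_sub. rewrite /slist mem_cat; apply/orP; right.
  by apply/mapP; exists (p, q); rewrite ?mem_enum.
rewrite -(hpart_id hX) [X in hpart X]matrix_sum_delta hpart_sum.
apply: (E_sum sE) => p; rewrite hpart_sum; apply: (E_sum sE) => q.
rewrite [X p q]complexE scalerDl [_ * _]mulrC -scalerA hpartD !hpartZr.
rewrite -!rscaleE -addVE.
exact: (subspD sE (subspZ _ sE (m1 p q)) (subspZ _ sE (m2 p q))).
Qed.


Lemma herm0 : Defs.hermitian (0 : M). Proof. exact: adjmx0. Qed.
Lemma hermD (x y : M) : Defs.hermitian x -> Defs.hermitian y -> Defs.hermitian (x + y).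
Proof. by move=> hx hy; rewrite /Defs.hermitian adjmxD hx hy. Qed.
Lemma hermZr (r : R) (x : M) : Defs.hermitian x -> Defs.hermitian ((r%:C)%C *: x).
Proof. by move=> hx; rewrite /Defs.hermitian adjmxZ hx conj_C. Qed.
Lemma hermN (x : M) : Defs.hermitian x -> Defs.hermitian (- x).
Proof. by move=> hx; rewrite /Defs.hermitian adjmxN hx. Qed.

Definition kpart (X : M) : M := hpart ((- 'i) *: X).
Lemma kpart_herm X : Defs.hermitian (kpart X). Proof. exact: hpart_herm. Qed.
Lemma kpartD X Y : kpart (X + Y) = kpart X + kpart Y.
Proof. by rewrite /kpart scalerDr hpartD. Qed.
Lemma kpartZr (r : R) X : kpart ((r%:C)%C *: X) = (r%:C)%C *: kpart X.
Proof. by rewrite /kpart scalerA mulrC -scalerA hpartZr. Qed.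
Lemma hpart_i X : hpart ('i *: X) = - kpart X.
Proof. by rewrite /kpart scaleNr hpartN opprK. Qed.
Lemma kpart_i X : kpart ('i *: X) = hpart X.
Proof.
rewrite /kpart scalerA mulNr -expr2 sqrCi opprK scale1r //.
Qed.
Lemma kpart_hermz X : Defs.hermitian X -> kpart X = 0.
Proof.
move=> hX; rewrite /kpart /hpart adjmxZ hX rmorphN /= conjCi opprK scaleNr addNr.
by rewrite scaler0.
Qed.
Lemma hk_dec X : hpart X + 'i *: kpart X = X.
Proof.
have ii : 'i * 'i = -1 :> C by rewrite -expr2 sqrCi.
apply/matrixP => a b; rewrite /kpart /hpart !mxE rmorphM /= rmorphN /= conjCi opprK.
set x := X a b; set y := (X b a)^*.
have -> : 'i * (2%:R^-1 * (- 'i * x + 'i * y)) = 2%:R^-1 * (- ('i * 'i) * x + ('i * 'i) * y).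
  by ring.
by rewrite ii; field.
Qed.

Lemma kpartW X : WW X -> WW (kpart X).
Proof. by move=> wX; apply: hpartW; apply: WWZ. Qed.

Section Psig.
Variable G : M -> C.
Definition psig (a : 'M[C]_n) : 'M[C]_k := \matrix_(p, q) G (a *t delta_mx p q).
Lemma psigE a p q : psig a p q = G (a *t delta_mx p q).
Proof. by rewrite mxE. Qed.
Lemma psig_lin : (forall X Y, G (X + Y) = G X + G Y) -> (forall c X, G (c *: X) = c * G X) ->
  lin psig.
Proof.
move=> GD GZ c x y; apply/matrixP => p q; rewrite psigE [in RHS]mxE [in RHS]mxE.
by rewrite (psigE x) (psigE y) tensmxDl tensmxZl GD GZ.
Qed.
Lemma psig_tr : (forall X Y, G (X + Y) = G X + G Y) -> (forall c X, G (c *: X) = c * G X) ->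
  G 0 = 0 -> forall a b, \tr (psig a *m b^T) = G (a *t b).
Proof.
move=> GD GZ G0 a b.
have G_sum : forall I (r : seq I) (H : I -> M), G (\sum_(i <- r) H i) = \sum_(i <- r) G (H i).
  by move=> I r H; elim/big_rec2: _ => [|i y1 y2 _ <-] //; rewrite GD.
rewrite trE [in RHS](matrix_sum_delta b) tensmx_sumr G_sum; apply: eq_bigr => p _.
rewrite tensmx_sumr G_sum; apply: eq_bigr => q _.
by rewrite tensmxZr GZ psigE mulrC.
Qed.
End Psig.

Section GG.
Variable F : V -> R.
Hypothesis FL : forall (r : R) (x y : M), Defs.hermitian x -> Defs.hermitian y ->
  F ((r%:C)%C *: x + y) = r * F x + F y.
Hypothesis FP : forall x : M, Defs.hermitian x -> PP x -> 0 <= F x.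
Hypothesis FE : forall x : M, WW x -> Defs.hermitian x -> F x = fV x.

Lemma F0 : F 0 = 0.
Proof.
have := FL 1 herm0 herm0; rewrite scaler0 addr0 mul1r => h.
by apply: (addrI (F 0)); rewrite addr0 -h.
Qed.
Lemma FD x y : Defs.hermitian x -> Defs.hermitian y -> F (x + y) = F x + F y.
Proof. by move=> hx hy; have := FL 1 hx hy; rewrite rmorph1 scale1r mul1r. Qed.
Lemma FZ (r : R) x : Defs.hermitian x -> F ((r%:C)%C *: x) = r * F x.
Proof. by move=> hx; have := FL r hx herm0; rewrite !addr0 F0 addr0. Qed.
Lemma FN x : Defs.hermitian x -> F (- x) = - F x.
Proof.
move=> hx; have -> : - x = ((-1)%:C)%C *: x by rewrite rmorphN rmorph1 scaleN1r.
by rewrite FZ // mulN1r.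
Qed.

Definition G (X : M) : C := (F (hpart X))%:C%C + 'i * (F (kpart X))%:C%C.

Lemma GD X Y : G (X + Y) = G X + G Y.
Proof.
rewrite /G hpartD kpartD (FD (hpart_herm X) (hpart_herm Y)) (FD (kpart_herm X) (kpart_herm Y)) !RCD.
ring.
Qed.
Lemma GZr (r : R) X : G ((r%:C)%C *: X) = (r%:C)%C * G X.
Proof.
rewrite /G hpartZr kpartZr (FZ r (hpart_herm X)) (FZ r (kpart_herm X)) !RCM.
ring.
Qed.
Lemma GZi X : G ('i *: X) = 'i * G X.
Proof.
have ii : 'i * 'i = -1 :> C by rewrite -expr2 sqrCi.
rewrite /G hpart_i kpart_i (FN (kpart_herm X)) RCN.
by rewrite mulrDr mulrA ii mulN1r addrC.
Qed.
Lemma iE : 'i%C = 'i :> C. Proof. by []. Qed.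
Lemma GZ c X : G (c *: X) = c * G X.
Proof.
have -> : c *: X = ((complex.Re c)%:C)%C *: X + ((complex.Im c)%:C)%C *: ('i *: X).
  by rewrite scalerA -scalerDl [in LHS](complexE c) iE mulrC.
rewrite GD !GZr GZi [in RHS](complexE c) iE; ring.
Qed.
Lemma G0 : G 0 = 0.
Proof. by rewrite -(scale0r (0 : M)) GZ mul0r. Qed.
Lemma G_sum I (r : seq I) (H : I -> M) : G (\sum_(i <- r) H i) = \sum_(i <- r) G (H i).
Proof.
elim/big_rec2: _ => [|i y1 y2 _ <-]; first exact: G0.
by rewrite GD.
Qed.
Lemma G_herm X : Defs.hermitian X -> G X = (F X)%:C%C.
Proof. by move=> hX; rewrite /G hpart_id // kpart_hermz // F0 mulr0 addr0. Qed.
Lemma G_W X : WW X -> G X = fW X.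
Proof.
move=> wX; rewrite /G (FE (hpartW wX) (hpart_herm X)) (FE (kpartW wX) (kpart_herm X)) /fV.
rewrite !RRe_real; last 2 first.
- by apply: fW_real; [apply: kpartW | apply: kpart_herm].
- by apply: fW_real; [apply: hpartW | apply: hpart_herm].
by rewrite -(fWZ 'i (kpartW wX)) -(fWD (hpartW wX) (WWZ 'i (kpartW wX))) hk_dec.
Qed.

Definition psi := psig G.

Lemma psi_lin : lin psi.
Proof. by apply: psig_lin; [exact: GD | exact: GZ]. Qed.

Lemma psi_tr a b : \tr (psi a *m b^T) = G (a *t b).
Proof. by apply: psig_tr; [exact: GD | exact: GZ | exact: G0]. Qed.

Lemma psiE a p q : psi a p q = G (a *t delta_mx p q).
Proof. exact: psigE. Qed.

Lemma sum_delta2 (A : 'M[C]_k) p q :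
  \sum_p' \sum_q' A p' q' * delta_mx p q p' q' = A p q.
Proof.
rewrite (bigD1 p) //= [X in _ + X]big1 ?addr0; last first.
  move=> p' /negPf np; rewrite big1 // => q' _.
  by rewrite mxE np /= mulr0n mulr0.
rewrite (bigD1 q) //= [X in _ + X]big1 ?addr0; last first.
  by move=> q' /negPf nq; rewrite mxE nq andbF mulr0n mulr0.
by rewrite mxE !eqxx mulr1n mulr1.
Qed.

Lemma psi_cpos : C_positive setT Cc psi.
Proof.
move=> N a b _ [hX pX].
rewrite (eq_bigr (fun i => G (a i *t b i))); last by move=> i _; apply: psi_tr.
rewrite -G_sum G_herm // ler0c; apply: FP => //.
Qed.

Lemma psi_ext x : B x -> psi x = phi x.
Proof.
move=> Bx; apply/matrixP => p q; rewrite psiE.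
have r := rep_t (delta_mx p q) Bx.
rewrite G_W; last by exists 1%N, (fun _ => x), (fun _ => delta_mx p q).
by rewrite (fW_rep r) /rval big_ord1 trE sum_delta2.
Qed.

End GG.

Lemma main_ext : exists psi0 : 'M[C]_n -> 'M[C]_k,
  [/\ lin psi0, C_positive setT Cc psi0 & forall x, B x -> psi0 x = phi x].
Proof.
have cf : forall v, v \in slist -> cof PV WV v /\ cof PV WV (- v).
  move=> v vs.
  have hv : Defs.hermitian v.
    move: vs; rewrite /slist mem_cat => /orP [] /mapP [pq _ ->]; exact: hpart_herm.
  by split; apply: cof_herm => //; apply: hermN.
have [F [Fl Fp Fe]] := riesz PVD PVZ WV_sub fV_lin fV_pos cf.
have FL : forall (r : R) (x y : M), Defs.hermitian x -> Defs.hermitian y ->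
    F ((r%:C)%C *: x + y) = r * F x + F y.
  by move=> r x y hx hy; exact: (Fl r x y (herm_ext hx) (herm_ext hy)).
have FP : forall x : M, Defs.hermitian x -> PP x -> 0 <= F x.
  by move=> x hx px; exact: (Fp x (herm_ext hx) px).
have FE : forall x : M, WW x -> Defs.hermitian x -> F x = fV x.
  by move=> x wx hx; exact: (Fe x (conj wx hx)).
exists (psi F); split.
- exact: psi_lin.
- exact: psi_cpos.
- exact: psi_ext.
Qed.

End Final.

Unset Implicit Arguments.
Local Open Scope classical_set_scope.

Theorem corollary2 (R : realType) (n k : nat)
    (Cc : set ('M[R[i]]_k -> 'M[R[i]]_k)) (B : set 'M[R[i]]_n)
    (phi : 'M[R[i]]_n -> 'M[R[i]]_k) :
  mapping_cone Cc ->
  unital_Cstar_subalg B ->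
  lin_on B phi ->
  C_positive B Cc phi ->
  exists psi : 'M[R[i]]_n -> 'M[R[i]]_k,
    [/\ lin psi,
        C_positive setT Cc psi &
        forall x, B x -> psi x = phi x].
Proof.
move=> mc hB lphi cpos.
exact: (main_ext mc hB cpos).
Qed.
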